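(* Let $(b,w)\in\mathbb{N}^2$. Then there exists a partition $\lambda$ such that $(b(\lambda),w(\lambda))=(b,w)$ if and only if there exist integers $k,l\in\mathbb{N}=\{0,1,2,\dots\}$ such that either \[(b,w)=\big((k+1)^2+l,\;k(k+1)+l\big)\quad\text{or}\quad (b,w)=\big(k^2+l,\;k(k+1)+l\big).\]
   Context: A partition is a finite nonincreasing sequence $\lambda=(\lambda_1,\lambda_2,\dots,\lambda_r)$ of positive integers (the empty sequence is the unique partition of $0$); set $\lambda_i=0$ for $i<1$ and $i>r$. Its Ferrers graph consists of unit squares, with row $i$ (rows indexed from $i=0$) containing $\lambda_{i+1}$ squares, left-justified, columns indexed from $0$. Colour the square in row $r$ and column $c$ black if $r+c$ is even and white if $r+c$ is odd. Then $b(\lambda)$ is the number of black squares and $w(\lambda)$ the number of white squares; explicitly $b(\lambda)=\sum_{j}\lceil \lambda_{2j+1}/2\rceil+\sum_j\lfloor \lambda_{2j}/2\rfloor$ and $w(\lambda)=\sum_{j}\lfloor \lambda_{2j+1}/2\rfloor+\sum_j\lceil \lambda_{2j}/2\rceil$. *)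

(* Defs.v *)
From mathcomp Require Import all_boot.
Set Implicit Arguments. Unset Strict Implicit. Unset Printing Implicit Defensive.

(* A partition: finite nonincreasing sequence of positive integers.
   Row i (0-indexed) of the Ferrers graph has nth 0 la i squares. *)
Definition is_partition (la : seq nat) : bool :=
  sorted geq la && all (fun x => 0 < x) la.

Definition black (la : seq nat) : nat :=
  \sum_(r < size la) count (fun c => ~~ odd (r + c)) (iota 0 (nth 0 la r)).

Definition white (la : seq nat) : nat :=
  \sum_(r < size la) count (fun c => odd (r + c)) (iota 0 (nth 0 la r)).

(* Main.v *)
Require Import Defs.
From mathcomp Require Import all_boot.
From mathcomp Require Import zify.

Lemma cnt_odd m n : count odd (iota m n) = if odd m then uphalf n else n./2.
Proof.
elim: n m => [|n IH] m /=; first by case: (odd m).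
rewrite IH /=; case: (odd m) => /=; lia.
Qed.

Lemma cnt_even n : count (fun c => ~~ odd c) (iota 0 n) = uphalf n.
Proof.
rewrite (eq_count (a2 := predC odd)) //.
have := count_predC odd (iota 0 n). rewrite size_iota cnt_odd /=.
have := uphalf_half n. have := odd_double_half n. lia.
Qed.

Lemma black_nil : black [::] = 0. Proof. by rewrite /black big_ord0. Qed.
Lemma white_nil : white [::] = 0. Proof. by rewrite /white big_ord0. Qed.

Lemma black_cons a s : black (a :: s) = uphalf a + white s.
Proof.
rewrite /black /white /= big_ord_recl /= cnt_even; congr (_ + _).
apply: eq_bigr => i _ /=. by apply: eq_count => c; rewrite /bump /= ?negbK.
Qed.

Lemma white_cons a s : white (a :: s) = a./2 + black s.
Proof.
rewrite /black /white /= big_ord_recl /=.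
have -> : count (fun c => odd (0 + c)) (iota 0 a) = a./2 by rewrite (eq_count (a2 := odd)) // cnt_odd.
congr (_ + _).
Qed.

Lemma inv s : sorted geq s -> exists k l,
  ((black s, white s) = ((k+1)^2+l, k*(k+1)+l) /\ 2*k+1 <= head 0 s) \/
  ((black s, white s) = (k^2+l, k*(k+1)+l) /\ 2*k <= head 0 s).
Proof.
elim: s => [|a s IH] Hs.
  exists 0, 0; right; rewrite black_nil white_nil; split => //.
have Hs' : sorted geq s by apply: (path_sorted Hs).
have hd : head 0 s <= a by case: s Hs {IH Hs'} => //= x s' /andP[].
have [k [l [[[E1 E2] H] | [[E1 E2] H]]]] := IH Hs'; rewrite black_cons white_cons /=;
have := uphalf_half a; have := odd_double_half a;
case: (odd a) => /= Ea Eu; rewrite Eu; set h := a./2 in Ea Eu *;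
rewrite E1 E2.
- exists k, (k+h+1+l); right; split; [congr (_,_); nia | lia].
- exists (k+1), (h-k-1+l); right; split; [congr (_,_); nia | lia].
- exists k, (h-k+l); left; split; [congr (_,_); nia | lia].
- case: k E1 E2 H => [|k] E1 E2 H.
  + exists 0, (h+l); right; split; [congr (_,_); nia | lia].
  + exists k, (k+1+h+l); left; split; [congr (_,_); nia | lia].
Qed.

Fixpoint st n := if n is m.+1 then n :: st m else [::].

Lemma st_path m n : n <= m -> path geq m (st n).
Proof.
elim: n m => [|n IH] m //= H. rewrite H /=. exact: IH.
Qed.

Lemma st_pos n : all (fun x => 0 < x) (st n).
Proof. by elim: n => //= n ->. Qed.

Lemma st_bw k : (black (st (2*k+1)), white (st (2*k+1))) = ((k+1)^2, k*(k+1)) /\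
                (black (st (2*k)), white (st (2*k))) = (k^2, k*(k+1)).
Proof.
elim: k => [|k [[E1 E2] [F1 F2]]].
  by rewrite /= black_cons white_cons black_nil white_nil.
have e1 : st (2 * k.+1) = (2*k+2) :: (2*k+1) :: st (2*k).
  rewrite (_ : 2 * k.+1 = (2*k).+2); last lia. rewrite /=; congr (_ :: _); try congr (_ :: _); lia.
have e2 : st (2 * k.+1 + 1) = (2*k+3) :: st (2*k+2).
  rewrite (_ : 2 * k.+1 + 1 = (2*k+2).+1); last lia. rewrite /=; congr (_ :: _); try congr (_ :: _); lia.
have e3 : st (2*k+2) = (2*k+2) :: (2*k+1) :: st (2*k).
  rewrite (_ : 2*k+2 = (2*k).+2); last lia. rewrite /=; congr (_ :: _); try congr (_ :: _); lia.
have h1 : uphalf (2*k+1) = k+1 by lia.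
have h2 : (2*k+1)./2 = k by lia.
have h3 : uphalf (2*k+2) = k+1 by lia.
have h4 : (2*k+2)./2 = k+1 by lia.
have h5 : uphalf (2*k+3) = k+2 by lia.
have h6 : (2*k+3)./2 = k+1 by lia.
rewrite e2 e1 e3 !(black_cons, white_cons) ?h1 ?h2 ?h3 ?h4 ?h5 ?h6 ?E1 ?E2 ?F1 ?F2.
split; congr (_,_). all: nia.
Qed.

Theorem theoremB (b w : nat) :
  (exists la : seq nat, is_partition la /\ black la = b /\ white la = w) <->
  (exists k l : nat,
      (b, w) = ((k + 1) ^ 2 + l, k * (k + 1) + l) \/
      (b, w) = (k ^ 2 + l, k * (k + 1) + l)).
Proof.
split.
  move=> [la [/andP [Hs _] [<- <-]]].
  have [k [l [[E _]|[E _]]]] := @inv _ Hs; exists k, l; [left|right]; exact: E.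
move=> [k [l [[-> ->]|[-> ->]]]].
  exists ((2*k+1+2*l) :: st (2*k)); split.
    rewrite /is_partition /= st_pos andbT; apply/andP; split; last lia.
    apply: st_path; lia.
  have [_ [E1 E2]] := st_bw k.
  rewrite black_cons white_cons E1 E2.
  split; nia.
case: k => [|K].
  case: l => [|L].
    by exists [::]; rewrite black_nil white_nil.
  exists [:: 2*L+2]; split; first by rewrite /is_partition /=; lia.
  rewrite black_cons white_cons black_nil white_nil.
  split; nia.
exists ((2*K+2+2*l) :: st (2*K+1)); split.
  rewrite /is_partition /= st_pos andbT; apply/andP; split; last lia.
  apply: st_path; lia.
have [[E1 E2] _] := st_bw K.
rewrite black_cons white_cons E1 E2.
split; nia.
Qed.
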